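(* Let $X$ be a real Hilbert space, $n\in\{3,4,\ldots\}$, $U_1,\ldots,U_n$ closed linear subspaces of $X$, $P_i:=P_{U_i}$, $Z:=U_1\cap\cdots\cap U_n$. Define $M\colon X^{n-1}\to X^n$ by $M(z_1,\ldots,z_{n-1})=(x_1,\ldots,x_n)$ with $x_1=P_1z_1$, $x_i=P_i(x_{i-1}+z_i-z_{i-1})$ for $2\le i\le n-1$, $x_n=P_n(x_1+x_{n-1}-z_{n-1})$, and define $T\colon X^{n-1}\to X^{n-1}$ by $T\mathbf z=\mathbf z+\big((Q_2-Q_1)M\mathbf z,\ldots,(Q_n-Q_{n-1})M\mathbf z\big)$, where $Q_i\colon X^n\to X$ is the $i$-th coordinate map. Let \[ \Psi\colon U_1^\perp\times\cdots\times U_{n-1}^\perp\to X^{n-1},\quad (y_1,\ldots,y_{n-1})\mapsto(y_1,\,y_1+y_2,\,\ldots,\,y_1+\cdots+y_{n-1}). \] Then $\Psi$ is a continuous linear operator with closed range, and \[ \operatorname{Fix}T=\{(z,\ldots,z)\in X^{n-1}: z\in Z\}\oplus E, \] where \[ E:=\operatorname{ran}\Psi\cap(X^{n-2}\times U_n^\perp)\subseteq U_1^\perp\times(U_1^\perp+U_2^\perp)\times\cdots\times(U_1^\perp+\cdots+U_{n-2}^\perp)\times\big((U_1^\perp+\cdots+U_{n-1}^\perp)\cap U_n^\perp\big). \] Moreover, for $\mathbf z=(z_1,\ldots,z_{n-1})\in X^{n-1}$ and $\bar z=(z_1+\cdots+z_{n-1})/(n-1)$, \[ P_{\operatorname{Fix}T}\mathbf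 z=(P_Z\bar z,\ldots,P_Z\bar z)\oplus P_E\mathbf z, \] and hence $P_1\big(Q_1P_{\operatorname{Fix}T}\mathbf z\big)=P_Z\bar z$, where here $Q_1$ denotes the first-coordinate map on $X^{n-1}$.
   Context: $P_S$ denotes the orthogonal projection onto a closed linear subspace (or closed convex set) $S$; $\oplus$ denotes a sum of mutually orthogonal vectors or subspaces; $\operatorname{ran}$ denotes range. *)

(* Defs.v *)
(* Real Hilbert space = complete normed module over a
   realType whose norm comes from an (explicitly given) inner product. *)
From Stdlib Require Import ClassicalEpsilon.
From mathcomp Require Import all_boot all_algebra.
From mathcomp Require Import all_classical all_reals all_analysis.
Import GRing.Theory Num.Theory.
Local Open Scope ring_scope.
Local Open Scope classical_set_scope.

Set Implicit Arguments.
Unset Strict Implicit.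
Unset Printing Implicit Defensive.

Definition inner_product {R : realType} {X : normedModType R}
  (ip : X -> X -> R) : Prop :=
  [/\ (forall x y, ip x y = ip y x),
      (forall (a : R) x y z, ip (a *: x + y) z = a * ip x z + ip y z),
      (forall x, 0 <= ip x x) &
      (forall x, `|x| = Num.sqrt (ip x x))].

Definition hclosed_subspace {R : realType} {X : normedModType R} (U : set X) : Prop :=
  [/\ U 0, (forall (a : R) x y, U x -> U y -> U (a *: x + y)) & closed U].

Definition hperp {R : realType} {X : lmodType R} (ip : X -> X -> R) (U : set X) : set X :=
  [set x | forall u, U u -> ip x u = 0].

(* metric projection (nearest point) onto S w.r.t. the norm induced by ipV;
   the chosen nearest point (any value if none exists). *)
Definition hproj {R : realType} {V : lmodType R} (ipV : V -> V -> R) (S : set V) (v : V) : V :=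
  epsilon (inhabits 0)
    (fun p => S p /\ forall s, S s -> ipV (v - p) (v - p) <= ipV (v - s) (v - s)).

(* inner product of the Hilbert direct sum X^k, elements are 'I_k -> X *)
Definition ipn {R : realType} {X : lmodType R} (ip : X -> X -> R) (k : nat)
  (z w : 'I_k -> X) : R := \sum_(i < k) ip (z i) (w i).

Definition ip_closed {R : realType} {V : lmodType R} (ipV : V -> V -> R) (S : set V) : Prop :=
  forall v, (forall e : R, 0 < e -> exists s, S s /\ Num.sqrt (ipV (v - s) (v - s)) < e) -> S v.

Definition ip_continuous_on {R : realType} {A B : lmodType R}
  (ipA : A -> A -> R) (ipB : B -> B -> R) (D : set A) (f : A -> B) : Prop :=
  forall v, D v -> forall e : R, 0 < e -> exists d : R, 0 < d /\
    forall w, D w -> Num.sqrt (ipA (v - w) (v - w)) < d ->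
      Num.sqrt (ipB (f v - f w) (f v - f w)) < e.

Definition linear_on {R : realType} {A B : lmodType R} (D : set A) (f : A -> B) : Prop :=
  forall (a : R) v w, D v -> D w -> f (a *: v + w) = a *: f v + f w.

(* 1-based coordinate j (1 <= j <= k) of z in X^k; 0 for j > k (only used with j >= 1) *)
Definition hcoord {X : zmodType} {k : nat} (z : 'I_k -> X) (j : nat) : X :=
  match (insub j.-1 : option 'I_k) with Some i => z i | None => 0 end.

Fixpoint Mseq {X : zmodType} (P : nat -> X -> X) (z : nat -> X) (k : nat) : X :=
  match k with
  | 0 => 0
  | S j => if j is 0 then P 1%N (z 1%N) else P k (Mseq P z j + z k - z j)
  end.

Definition Mmap {X : zmodType} (P : nat -> X -> X) (n : nat) (z : 'I_n.-1 -> X)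
  : 'I_n -> X :=
  fun i => let zz := hcoord z in
    if i.+1 == n then P n (Mseq P zz 1%N + Mseq P zz n.-1 - zz n.-1)
    else Mseq P zz i.+1.

Definition Tmap {X : zmodType} (P : nat -> X -> X) (n : nat) (z : 'I_n.-1 -> X)
  : 'I_n.-1 -> X :=
  fun i => let x := hcoord (Mmap P z) in z i + (x i.+2 - x i.+1).

Definition Psi {X : zmodType} (k : nat) (y : 'I_k -> X) : 'I_k -> X :=
  fun i => \sum_(j < k | (j <= i)%N) y j.

Definition sum_perps {R : realType} {X : lmodType R} (ip : X -> X -> R)
  (U : nat -> set X) (k : nat) : set X :=
  [set x | exists y : nat -> X,
     (forall j, (1 <= j <= k)%N -> hperp ip (U j) (y j)) /\
     x = \sum_(1 <= j < k.+1) y j].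

(* Main.v *)
From Stdlib Require Import ClassicalEpsilon.
Require Import Defs.
From mathcomp Require Import all_boot all_order all_algebra.
From mathcomp Require Import all_classical all_reals all_analysis.
From mathcomp Require Import ring lra zify.
Import Order.TTheory GRing.Theory Num.Theory.
Local Open Scope ring_scope.
Local Open Scope classical_set_scope.
Set Implicit Arguments.
Unset Strict Implicit.
Unset Printing Implicit Defensive.

Lemma small_inv (R : realType) (e : R) : 0 < e ->
  exists N : nat, forall m, (N <= m)%N -> ((m.+1)%:R : R)^-1 < e.
Proof.
move=> e0; exists (Num.Def.archi_bound e^-1) => m Nm.
have ie : 0 <= e^-1 by rewrite invr_ge0 ltW.
have h1 := archi_boundP ie.
have h2 : e^-1 < (m.+1)%:R.
  apply: (lt_le_trans h1); rewrite ler_nat; exact: leqW.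
rewrite -[X in _ < X]invrK ltf_pV2 ?posrE ?invr_gt0 ?ltr0Sn //.
Qed.

Arguments small_inv {R e}.

Lemma sqrt_lt (R : realType) (a e : R) : 0 < e -> a < e ^+ 2 -> Num.sqrt a < e.
Proof.
move=> e0 h; rewrite -[X in _ < X](ger0_norm (ltW e0)) -sqrtr_sqr ltr_sqrt //.
exact: exprn_gt0.
Qed.

Arguments sqrt_lt {R a e}.

Lemma lt_sq (R : realType) (a e : R) : 0 <= a -> 0 <= e -> (a ^+ 2 < e ^+ 2) = (a < e).
Proof. move=> a0 e0. by rewrite ltr_pXn2r. Qed.

Section IP.
Variables (R : realType) (V : lmodType R) (ipV : V -> V -> R).
Definition ipax := [/\ forall x y, ipV x y = ipV y x,
  forall (a : R) x y z, ipV (a *: x + y) z = a * ipV x z + ipV y z,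
  forall x, 0 <= ipV x x & forall x, ipV x x = 0 -> x = 0].
Hypothesis H : ipax.

Lemma ipC x y : ipV x y = ipV y x. Proof. by case: H. Qed.
Lemma ipL a x y z : ipV (a *: x + y) z = a * ipV x z + ipV y z. Proof. by case: H. Qed.
Lemma ipge0 x : 0 <= ipV x x. Proof. by case: H. Qed.
Lemma ipdef x : ipV x x = 0 -> x = 0. Proof. by case: H => _ _ _; apply. Qed.

Lemma ip0l z : ipV 0 z = 0.
Proof. have := ipL 1 0 0 z; rewrite scaler0 addr0 mul1r => h; lra. Qed.
Lemma ipDl x y z : ipV (x + y) z = ipV x z + ipV y z.
Proof. by have := ipL 1 x y z; rewrite scale1r mul1r. Qed.
Lemma ipZl a x z : ipV (a *: x) z = a * ipV x z.
Proof. by have := ipL a x 0 z; rewrite addr0 ip0l addr0. Qed.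
Lemma ipNl x z : ipV (- x) z = - ipV x z.
Proof. by rewrite -scaleN1r ipZl mulN1r. Qed.
Lemma ipBl x y z : ipV (x - y) z = ipV x z - ipV y z.
Proof. by rewrite ipDl ipNl. Qed.
Lemma ip0r z : ipV z 0 = 0. Proof. by rewrite ipC ip0l. Qed.
Lemma ipDr x y z : ipV z (x + y) = ipV z x + ipV z y.
Proof. by rewrite ipC ipDl !(ipC z). Qed.
Lemma ipZr a x z : ipV z (a *: x) = a * ipV z x.
Proof. by rewrite ipC ipZl ipC. Qed.
Lemma ipNr x z : ipV z (- x) = - ipV z x.
Proof. by rewrite ipC ipNl ipC. Qed.
Lemma ipBr x y z : ipV z (x - y) = ipV z x - ipV z y.
Proof. by rewrite ipDr ipNr. Qed.
Lemma ip_suml I (r : seq I) (P : pred I) (F : I -> V) z :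
  ipV (\sum_(i <- r | P i) F i) z = \sum_(i <- r | P i) ipV (F i) z.
Proof. exact: (big_morph (fun x => ipV x z) (fun x y => ipDl x y z) (ip0l z)). Qed.
Lemma ip_sumr I (r : seq I) (P : pred I) (F : I -> V) z :
  ipV z (\sum_(i <- r | P i) F i) = \sum_(i <- r | P i) ipV z (F i).
Proof. exact: (big_morph (fun x => ipV z x) (fun x y => ipDr x y z) (ip0r z)). Qed.

Definition nsq x := ipV x x.
Lemma nsq_ge0 x : 0 <= nsq x. Proof. exact: ipge0. Qed.
Lemma nsqD x y : nsq (x + y) = nsq x + 2 * ipV x y + nsq y.
Proof. rewrite /nsq ipDl !ipDr (ipC y x); lra. Qed.
Lemma nsqB x y : nsq (x - y) = nsq x - 2 * ipV x y + nsq y.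
Proof. rewrite /nsq ipBl !ipBr (ipC y x); lra. Qed.
Lemma nsqN x : nsq (- x) = nsq x.
Proof. by rewrite /nsq ipNl ipNr opprK. Qed.
Lemma nsqZ a x : nsq (a *: x) = a ^+ 2 * nsq x.
Proof. by rewrite /nsq ipZl ipZr mulrA expr2. Qed.
Lemma nsqBC x y : nsq (x - y) = nsq (y - x).
Proof. by rewrite -nsqN opprB. Qed.

Lemma ip_young t x y : 0 < t -> 2 * ipV x y <= t * nsq x + nsq y / t.
Proof.
move=> t0; have := nsq_ge0 (t *: x - y); rewrite nsqB nsqZ ipZl => h.
have -> : t * nsq x + nsq y / t = (t ^+ 2 * nsq x + nsq y) / t.
  by field; rewrite lt0r_neq0.
rewrite ler_pdivlMr //; lra.
Qed.

Lemma ip_CS x y : ipV x y ^+ 2 <= nsq x * nsq y.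
Proof.
have [y0|yn0] := eqVneq (nsq y) 0.
  rewrite (ipdef y0) ip0r expr0n /=; exact: mulr_ge0 (nsq_ge0 _) (nsq_ge0 _).
have q0 : 0 < nsq y by rewrite lt_def yn0 nsq_ge0.
have := nsq_ge0 (nsq y *: x - ipV x y *: y).
rewrite nsqB !nsqZ ipZl ipZr /nsq => h.
have h2 : 0 <= ipV y y * (ipV y y * ipV x x - ipV x y ^+ 2).
  by move: h; rewrite /nsq; nra.
by rewrite /nsq mulrC -subr_ge0 -(pmulr_rge0 _ q0).
Qed.

Definition subsp (S : set V) := S 0 /\ forall a x y, S x -> S y -> S (a *: x + y).

Lemma subspZ S a x : subsp S -> S x -> S (a *: x).
Proof. by case=> S0 SL Sx; rewrite -[_ *: _]addr0; apply: SL. Qed.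
Lemma subspD S x y : subsp S -> S x -> S y -> S (x + y).
Proof. by case=> S0 SL Sx Sy; rewrite -[x]scale1r; apply: SL. Qed.
Lemma subspN S x : subsp S -> S x -> S (- x).
Proof. by move=> SS Sx; rewrite -scaleN1r; apply: subspZ. Qed.
Lemma subspB S x y : subsp S -> S x -> S y -> S (x - y).
Proof. by move=> SS Sx Sy; apply: subspD => //; apply: subspN. Qed.

Lemma hproj_char (S : set V) v p : S p ->
  (forall s, S s -> ipV (v - p) (p - s) = 0) -> hproj ipV S v = p.
Proof.
move=> Sp orth.
have key : forall s, S s -> nsq (v - s) = nsq (v - p) + nsq (p - s).
  move=> s Ss; have -> : v - s = (v - p) + (p - s) by rewrite addrA subrK.
  by rewrite (nsqD (v - p) (p - s)) orth // mulr0 addr0.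
have := epsilon_spec (inhabits (0 : V))
  (fun q => S q /\ forall s, S s -> ipV (v - q) (v - q) <= ipV (v - s) (v - s)).
rewrite /hproj; set q := epsilon _ _ => hq.
have [Sq qmin] : S q /\ forall s, S s -> ipV (v - q) (v - q) <= ipV (v - s) (v - s).
  apply: hq; exists p; split => // s Ss.
  by have := key s Ss; have := nsq_ge0 (p - s); rewrite /nsq; lra.
have := qmin p Sp; have := key q Sq; rewrite /nsq => e1 e2.
have h : ipV (p - q) (p - q) = 0 by have := ipge0 (p - q); lra.
by apply/eqP; rewrite eq_sym -subr_eq0; apply/eqP/ipdef.
Qed.

Lemma hproj_orth (S : set V) v : subsp S ->
  (exists p, S p /\ forall s, S s -> ipV (v - p) s = 0) ->
  S (hproj ipV S v) /\ forall s, S s -> ipV (v - hproj ipV S v) s = 0.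
Proof.
move=> SS [p [Sp orth]]; rewrite (@hproj_char S v p Sp) //.
by move=> s Ss; apply: orth; apply: subspB.
Qed.


Definition ipcomplete := forall u : nat -> V,
  (forall e, 0 < e -> exists N, forall m k, (N <= m)%N -> (N <= k)%N -> nsq (u m - u k) < e) ->
  exists l, forall e, 0 < e -> exists N, forall m, (N <= m)%N -> nsq (u m - l) < e.

Lemma proj_exists (S : set V) : ipcomplete -> subsp S -> ip_closed ipV S ->
  forall v, exists p, S p /\ forall s, S s -> ipV (v - p) s = 0.
Proof.
move=> Hc SS Scl v.
pose D := [set nsq (v - s) | s in S].
have D0 : D (nsq (v - 0)) by exists 0 => //; case: SS.
have lbD : lbound D 0 by move=> _ [s _ <-]; exact: nsq_ge0.
have hinf : has_inf D by split; [exists (nsq (v - 0)) | exists 0].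
pose d := inf D.
have hd : forall s, S s -> d <= nsq (v - s).
  by move=> s Ss; apply: (ge_inf (proj2 hinf)); exists s.
have d0 : 0 <= d by apply: lb_le_inf => //; exists (nsq (v - 0)).
have hmin : forall k : nat, exists s, S s /\ nsq (v - s) < d + ((k.+1)%:R)^-1.
  move=> k; have ik : 0 < ((k.+1)%:R : R)^-1 by rewrite invr_gt0 ltr0Sn.
  have [_ [s Ss <-] hs] := inf_adherent ik hinf.
  by exists s.
have [u hu] := choice hmin.
have cau : forall m k, nsq (u m - u k) <= 2 * ((m.+1)%:R)^-1 + 2 * ((k.+1)%:R)^-1.
  move=> m k; have [Sm lm] := hu m; have [Sk lk] := hu k.
  pose w := 2^-1 *: (u m + u k).
  have Sw : S w by apply: subspZ => //; apply: subspD.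
  have hw := hd w Sw.
  have e1 : (v - u m) + (v - u k) = 2 *: (v - w).
    rewrite /w scalerBr scalerA mulfV ?pnatr_eq0 // scale1r scaler_nat mulr2n.
    by rewrite opprD !addrA; congr (_ + _); rewrite -!addrA; congr (_ + _); rewrite addrC.
  have e2 : (v - u m) - (v - u k) = u k - u m.
    by rewrite opprB [_ + (u k - v)]addrC addrA subrK.
  have par := nsqD (v - u m) (v - u k); have par2 := nsqB (v - u m) (v - u k).
  rewrite e1 nsqZ in par; rewrite e2 in par2.
  rewrite nsqBC; move: par par2 hw lm lk; rewrite expr2; move: (_ ^-1) (_ ^-1) => a b; clear -a; lra.
have cauchy : forall e, 0 < e -> exists N, forall m k, (N <= m)%N -> (N <= k)%N ->
    nsq (u m - u k) < e.
  move=> e e0; have [N hN] := small_inv (divr_gt0 e0 (ltr0Sn R 3)).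
  exists N => m k Nm Nk; apply: (le_lt_trans (cau m k)).
  move: (hN m Nm) (hN k Nk); set a := ((m.+1)%:R : R)^-1; set b := ((k.+1)%:R : R)^-1.
  clearbody a b; lra.
have [l hl] := Hc u cauchy.
have Sl : S l.
  apply: Scl => e e0; have [N hN] := hl _ (exprn_gt0 2 e0).
  exists (u N); split; first by case: (hu N).
  by apply: sqrt_lt => //; rewrite -[ipV _ _]/(nsq (l - u N)) nsqBC; apply: hN.
have near : nsq (v - l) <= d.
  rewrite leNgt; apply/negP => dlt.
  pose del := nsq (v - l) - d.
  have del0 : 0 < del by rewrite /del subr_gt0.
  pose C := d + 2.
  have C0 : 0 < C by rewrite /C; lra.
  pose t := del / (4 * C).
  have t0 : 0 < t by rewrite /t divr_gt0 // mulr_gt0.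
  have [N1 h1] := small_inv (divr_gt0 del0 (ltr0Sn R 3)).
  have [N2 h2] := hl _ (divr_gt0 (mulr_gt0 del0 t0) (ltr0Sn R 7)).
  have [N3 h3] := hl _ (divr_gt0 del0 (ltr0Sn R 7)).
  pose k := (N1 + N2 + N3)%N.
  have k1 : (N1 <= k)%N by rewrite /k -addnA leq_addr.
  have k2 : (N2 <= k)%N by rewrite /k addnAC leq_addl.
  have k3 : (N3 <= k)%N by rewrite /k leq_addl.
  have {h1}h1 := h1 k k1; have {h2}h2 := h2 k k2; have {h3}h3 := h3 k k3.
  have [_ lk] := hu k.
  have invle : ((k.+1)%:R : R)^-1 <= 1 by rewrite invf_le1 ?ler1n ?ltr0Sn.
  move: h1 lk invle; set a := ((k.+1)%:R : R)^-1 => h1 lk invle; clearbody a.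
  set x := v - u k in lk *; set y := u k - l in h2 h3.
  have exy : v - l = x + y by rewrite /x /y addrA subrK.
  have hy := ip_young x y t0.
  have tx : t * nsq x <= del / 4.
    have -> : del / 4 = t * C by rewrite /t; field; rewrite lt0r_neq0.
    by rewrite ler_pM2l //; rewrite /C; lra.
  have ty : nsq y / t < del / 8.
    rewrite ltr_pdivrMr //; apply: (lt_le_trans h2); rewrite le_eqVlt; apply/orP; left.
    by apply/eqP; ring.
  have nv := nsqD x y; rewrite -exy in nv.
  have delE : del = nsq (v - l) - d by [].
  clearbody t C del.
  move: (nsq y / t) ty hy => yt ty hy.
  lra.
exists l; split => // s Ss.
pose c := ipV (v - l) s; pose q := nsq s.
have q0 : 0 <= q := nsq_ge0 s.
pose tau := c / (q + 1).
have Sls : S (l + tau *: s) by rewrite addrC; apply: (proj2 SS).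
have h := hd _ Sls.
have e3 : v - (l + tau *: s) = (v - l) - tau *: s by rewrite opprD addrA.
rewrite e3 nsqB nsqZ ipZr in h.
have hc : c = tau * (q + 1) by rewrite /tau mulfVK // lt0r_neq0 //; lra.
have : 0 <= - tau ^+ 2 * (q + 2).
  move: h near; rewrite -/c -/q hc; nra.
have tq : 0 < q + 2 by lra.
rewrite mulNr oppr_ge0 pmulr_lle0 // => htau.
have : tau ^+ 2 = 0 by apply/eqP; rewrite eq_le htau sqr_ge0.
by move/eqP; rewrite sqrf_eq0 => /eqP t0; rewrite -/c hc t0 mul0r.
Qed.

End IP.

Section XSpace.
Variables (R : realType) (X : completeNormedModType R) (ip : X -> X -> R).
Hypothesis Hip : inner_product ip.

Lemma ipax_X : ipax ip.
Proof.
case: Hip => h1 h2 h3 h4; split => // x hx; apply/normr0_eq0.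
by rewrite h4 hx sqrtr0.
Qed.

Lemma nsq_norm (x : X) : nsq ip x = `|x| ^+ 2.
Proof. by case: Hip => _ _ h3 h4; rewrite h4 sqr_sqrtr. Qed.

Lemma ipcomplete_X : ipcomplete ip.
Proof.
move=> u hu.
have cu : cauchy (u @ \oo).
  apply: cauchy_exP => e e0.
  have [N hN] := hu _ (exprn_gt0 2 e0).
  exists (u N); exists N => // m /= Nm.
  rewrite -ball_normE /=.
  have := hN N m (leqnn N) Nm; rewrite nsq_norm.
  by rewrite lt_sq // ltW.
have /cauchy_cvgP cv := cu.
exists (lim (u @ \oo)) => e e0.
have se : 0 < Num.sqrt e by rewrite sqrtr_gt0.
have := (proj1 (cvgrPdist_lt _ _) cv) (Num.sqrt e) se.
case=> N _ hN; exists N => m Nm; have := hN m Nm => /=.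
rewrite nsq_norm distrC => h.
have -> : e = Num.sqrt e ^+ 2 by rewrite sqr_sqrtr // ltW.
by rewrite lt_sq // sqrtr_ge0.
Qed.

Lemma ip_closed_X (S : set X) : closed S -> ip_closed ip S.
Proof.
move=> cS v hv; apply: cS => B /nbhs_ballP [e /= e0 hB].
have [s [Ss hs]] := hv e e0; exists s; split => //; apply: hB.
rewrite -ball_normE /=; case: Hip => _ _ _ h4; by rewrite h4.
Qed.

End XSpace.

Lemma sqrt_lt_inv (R : realType) (a e : R) : 0 <= a -> Num.sqrt a < e -> a < e ^+ 2.
Proof.
move=> a0 h; have e0 : 0 <= e by apply: le_trans (ltW h); exact: sqrtr_ge0.
by rewrite -(sqr_sqrtr a0) lt_sq // sqrtr_ge0.
Qed.

Lemma sq_small (R : realType) (c q : R) : 0 <= q ->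
  (forall e, 0 < e -> c <= e ^+ 2 * q) -> c <= 0.
Proof.
move=> q0 h; rewrite leNgt; apply/negP => c0.
pose e := c / (2 * q + 2 + c).
have den : 0 < 2 * q + 2 + c by lra.
have e0 : 0 < e by rewrite /e divr_gt0.
have e1 : e < 1 by rewrite /e ltr_pdivrMr // mul1r; lra.
have eq : e * (2 * q + 2 + c) = c by rewrite /e mulfVK // lt0r_neq0.
have := h e e0; clearbody e; nra.
Qed.

Section Prod.
Variables (R : realType) (X : lmodType R) (ip : X -> X -> R) (k : nat).
Hypothesis H : ipax ip.

Lemma ipax_n : ipax (@ipn R X ip k).
Proof.
split.
- by move=> x y; apply: eq_bigr => i _; rewrite ipC.
- move=> a x y z; rewrite /ipn.
  rewrite (eq_bigr (fun i => a * ip (x i) (z i) + ip (y i) (z i))); last first.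
    by move=> i _; exact: ipL.
  by rewrite big_split /= -mulr_sumr.
- by move=> x; apply: sumr_ge0 => i _; apply: ipge0.
- move=> x hx; apply: funext => i.
  have := @psumr_eq0P _ _ xpredT (fun i => ip (x i) (x i)) (fun i _ => ipge0 H (x i)) hx i isT.
  exact: ipdef.
Qed.

Lemma nsq_coord (z : 'I_k -> X) i : nsq ip (z i) <= nsq (@ipn R X ip k) z.
Proof.
rewrite /nsq /ipn (bigD1 i) //= lerDl; apply: sumr_ge0 => j _; exact: ipge0.
Qed.

Lemma ipcomplete_n : ipcomplete ip -> ipcomplete (@ipn R X ip k).
Proof.
move=> Hc u hu.
have hi : forall i, exists li, forall e, 0 < e -> exists N, forall m, (N <= m)%N ->
    nsq ip (u m i - li) < e.
  move=> i; apply: Hc => e e0; have [N hN] := hu e e0; exists N => m j Nm Nj.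
  exact: le_lt_trans (nsq_coord (u m - u j) i) (hN m j Nm Nj).
have [l hl] := choice hi.
exists l => e e0.
have ek : 0 < e / (k.+1)%:R by rewrite divr_gt0 // ltr0Sn.
have hN : forall i, exists N, forall m, (N <= m)%N -> nsq ip (u m i - l i) < e / (k.+1)%:R.
  by move=> i; apply: hl.
have [Nf hNf] := choice hN.
exists (\max_i Nf i) => m Hm.
apply: (@le_lt_trans _ _ (\sum_(i < k) e / (k.+1)%:R)).
  apply: ler_sum => i _; apply: ltW; apply: hNf; exact: leq_trans (leq_bigmax i) Hm.
by rewrite sumr_const card_ord -[_ *+ k]mulr_natr -mulrA gtr_pMr // ltr_pdivrMl ?ltr0Sn // mulr1 ltr_nat ltnSn.
Qed.

End Prod.

Section Closed.
Variables (R : realType) (V : lmodType R) (ipV : V -> V -> R).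
Hypothesis H : ipax ipV.

Lemma nsqB_le (a b : V) : nsq ipV (a - b) <= 2 * nsq ipV a + 2 * nsq ipV b.
Proof.
have := nsqB H a b; have := nsqD H a b; have := nsq_ge0 H (a + b); lra.
Qed.

Lemma lip_pre (W : lmodType R) (ipW : W -> W -> R) (HW : ipax ipW) (f : V -> W) (c : R) :
  0 <= c -> (forall v w, nsq ipW (f v - f w) <= c * nsq ipV (v - w)) ->
  forall v e, 0 < e -> exists d, 0 < d /\ forall w,
    Num.sqrt (ipV (v - w) (v - w)) < d -> Num.sqrt (ipW (f v - f w) (f v - f w)) < e.
Proof.
move=> c0 hf v e e0; exists (e / (c + 1)); split; first by rewrite divr_gt0 //; lra.
move=> w hw; apply: sqrt_lt => //.
have := sqrt_lt_inv (ipge0 H _) hw => h1.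
apply: (le_lt_trans (hf v w)).
have c1 : 0 < c + 1 by lra.
have h2 := ler_wpM2l c0 (ltW h1).
apply: (le_lt_trans h2).
have de : e / (c + 1) * (c + 1) = e by rewrite mulfVK // lt0r_neq0.
have d0 : 0 < e / (c + 1) by rewrite divr_gt0.
move: de d0; move: (e / (c + 1)) => d de d0; rewrite -de; nra.
Qed.



Lemma ip_closed_pre (W : lmodType R) (ipW : W -> W -> R) (HW : ipax ipW) (f : V -> W) (c : R)
  (A : set W) :
  0 <= c -> (forall v w, nsq ipW (f v - f w) <= c * nsq ipV (v - w)) ->
  ip_closed ipW A -> ip_closed ipV [set v | A (f v)].
Proof.
move=> c0 hf cA v hv; apply: cA => e e0.
have [d [d0 hd]] := lip_pre HW c0 hf v e0.
have [s [As hs]] := hv d d0; exists (f s); split => //; exact: hd.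
Qed.

Lemma ip_closedI (I : Type) (F : I -> set V) :
  (forall i, ip_closed ipV (F i)) -> ip_closed ipV [set v | forall i, F i v].
Proof.
move=> hF v hv i; apply: hF => e e0; have [s [Fs hs]] := hv e e0.
by exists s; split => //; apply: Fs.
Qed.

Lemma ip_closed_imp (P : Prop) (S : set V) :
  (P -> ip_closed ipV S) -> ip_closed ipV [set v | P -> S v].
Proof.
move=> hS v hv p; apply: (hS p) => e e0; have [s [Fs hs]] := hv e e0.
by exists s; split => //; apply: Fs.
Qed.

Lemma ip_closedT : ip_closed ipV setT.
Proof. by []. Qed.

Lemma hperp_subsp (U : set V) : subsp (hperp ipV U).
Proof.
split; first by move=> u _; rewrite ip0l.
by move=> a x y hx hy u Uu; rewrite ipL // hx // hy // mulr0 addr0.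
Qed.

Lemma hperp_closed (U : set V) : ip_closed ipV (hperp ipV U).
Proof.
move=> v hv u Uu; apply/eqP; rewrite -sqrf_eq0; apply/eqP.
apply/le_anti; rewrite sqr_ge0 andbT.
apply: (sq_small (nsq_ge0 H u)) => e e0.
have [s [hs hse]] := hv e e0.
have -> : ipV v u = ipV (v - s) u by rewrite ipBl // hs // subr0.
apply: (le_trans (ip_CS H (v - s) u)); apply: ler_wpM2r; first exact: nsq_ge0.
apply: ltW; apply: sqrt_lt_inv => //; exact: ipge0.
Qed.

End Closed.

Section HC.
Variables (Y : zmodType) (m : nat).
Implicit Types (f g : 'I_m -> Y).

Lemma hcE f (i : 'I_m) : hcoord f i.+1 = f i.
Proof. by rewrite /hcoord /= valK. Qed.

Lemma hcE' f j (h : (j.-1 < m)%N) : hcoord f j = f (Ordinal h).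
Proof.
rewrite /hcoord; case: insubP => [i' _ hi|]; last by rewrite h.
by congr f; apply: val_inj.
Qed.

Lemma hcD f g j : hcoord (f + g) j = hcoord f j + hcoord g j.
Proof. by rewrite /hcoord; case: insubP => [i' _ _|_] //; rewrite addr0. Qed.

Lemma hcN f j : hcoord (- f) j = - hcoord f j.
Proof. by rewrite /hcoord; case: insubP => [i' _ _|_] //; rewrite oppr0. Qed.

Lemma hcB f g j : hcoord (f - g) j = hcoord f j - hcoord g j.
Proof. by rewrite hcD hcN. Qed.

Lemma hc_const (w : Y) j : (j.-1 < m)%N -> hcoord (fun _ : 'I_m => w) j = w.
Proof. by move=> h; rewrite (hcE' _ h). Qed.

End HC.

Definition dif (Y : zmodType) m (b : 'I_m -> Y) (i : 'I_m) : Y :=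
  b i - (if val i is 0 then 0 else hcoord b i).

Section Fix.
Variables (R : realType) (X : lmodType R) (ip : X -> X -> R).
Hypothesis H : ipax ip.
Variables (n : nat) (U : nat -> set X) (P : nat -> X -> X).
Hypothesis hn : (3 <= n)%N.
Hypothesis PU : forall i v, (1 <= i <= n)%N -> U i (P i v).
Hypothesis Porth : forall i v, (1 <= i <= n)%N -> hperp ip (U i) (v - P i v).
Hypothesis Pchar : forall i v p, (1 <= i <= n)%N -> U i p -> hperp ip (U i) (v - p) -> P i v = p.

Lemma Tfix_iff (z : 'I_n.-1 -> X) : Tmap P z = z <->
  forall j, (1 <= j <= n)%N -> hcoord (Mmap P z) j = hcoord (Mmap P z) 1.
Proof.
set x := hcoord (Mmap P z).
have step : Tmap P z = z <-> forall i : 'I_n.-1, x i.+2 = x i.+1.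
  split => [h i | h].
    have := congr1 (fun f => f i - z i) h; rewrite /Tmap /= -/x addrC addKr subrr.
    by move/eqP; rewrite subr_eq0 => /eqP.
  by apply: funext => i; rewrite /Tmap -/x h subrr addr0.
split => [/step h j /andP[j1 jn] | h].
  elim: j j1 jn => [//|j IH] _ jn; case: j IH jn => [//|j] IH jn.
  have hj : (j < n.-1)%N by lia.
  by have := h (Ordinal hj) => /= ->; apply: IH => //; lia.
apply/step => i; have := ltn_ord i => hi.
by rewrite h ?h //; lia.
Qed.

Lemma xE (z : 'I_n.-1 -> X) j : (1 <= j < n)%N -> hcoord (Mmap P z) j = Mseq P (hcoord z) j.
Proof.
move=> hj; have h : (j.-1 < n)%N by lia.
rewrite (hcE' _ h) /Mmap /= prednK; last by lia.
have -> : (j == n) = false by apply/negbTE/eqP; lia.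
by case: (j) hj h => [|[|jj]].
Qed.

Lemma xnE (z : 'I_n.-1 -> X) : hcoord (Mmap P z) n =
  P n (Mseq P (hcoord z) 1 + Mseq P (hcoord z) n.-1 - hcoord z n.-1).
Proof.
have h : (n.-1 < n)%N by lia.
by rewrite (hcE' _ h) /Mmap /= prednK ?eqxx //; lia.
Qed.

Lemma Mseq_in zz j : (1 <= j <= n)%N -> U j (Mseq P zz j).
Proof. by case: j => [|[|j]] // hj; apply: PU. Qed.

Lemma fix_to (z : 'I_n.-1 -> X) : Tmap P z = z -> exists w, (forall i, (1 <= i <= n)%N -> U i w) /\
  (forall i : 'I_n.-1, hperp ip (U i.+1) (dif (z - fun _ => w) i)) /\
  (forall i : 'I_n.-1, i.+1 = n.-1 -> hperp ip (U n) ((z - fun _ => w) i)).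
Proof.
move=> /Tfix_iff hx; set x := hcoord (Mmap P z) in hx; set zz := hcoord z.
have xj : forall j, (1 <= j < n)%N -> Mseq P zz j = x 1.
  by move=> j hj; rewrite -xE //; apply: hx; lia.
have x1 : x 1 = P 1 (zz 1) by rewrite /x xE //; lia.
have xn : P n (x 1 + x 1 - zz n.-1) = x 1.
  have e1 : Mseq P zz 1 = x 1 by apply: xj; lia.
  have e2 : Mseq P zz n.-1 = x 1 by apply: xj; lia.
  have := xnE z; rewrite -/zz e1 e2 => <-; apply: hx; lia.
exists (x 1); split; [|split].
- move=> i hi; case: (ltngtP i n) => hin; [| lia |].
  + by rewrite -(xj i); [apply: Mseq_in; lia | lia].
  + rewrite hin -(hx n); last lia.
    rewrite /x xnE; apply: PU; lia.
- move=> i; rewrite /dif /=.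
  case hv : (val i) => [|j].
    have -> : (z - (fun=> x 1)) i = z i - x 1 by [].
    rewrite subr0 -(hcE z) hv -/zz x1; apply: Porth; lia.
  rewrite hcB hc_const; last by have := ltn_ord i; rewrite hv; lia.
  have -> : (z - (fun=> x 1)) i = z i - x 1 by [].
  rewrite -(hcE z) -/zz hv opprB addrA subrK.
  have hv2 : nat_of_ord i = j.+1 := hv.
  have hj2 : (j.+2 < n)%N by have := ltn_ord i; lia.
  have e1 : Mseq P zz j.+2 = x 1 by apply: xj; lia.
  have e2 : Mseq P zz j.+1 = x 1 by apply: xj; lia.
  have := Porth (Mseq P zz j.+1 + zz j.+2 - zz j.+1) (_ : (1 <= j.+2 <= n)%N).
  rewrite -[P _ _]/(Mseq P zz j.+2) e1 e2 addrAC [x 1 + _]addrC addrK; apply; lia.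
- move=> i hi; have := Porth (x 1 + x 1 - zz n.-1) (_ : (1 <= n <= n)%N).
  rewrite xn addrAC addrK => h.
  have -> : (z - fun=> x 1) i = - (x 1 - zz n.-1).
    have -> : (z - fun=> x 1) i = z i - x 1 by [].
    by rewrite -(hcE z i) hi -/zz opprB.
  by apply: subspN (hperp_subsp H _) _; apply: h; lia.
Qed.

Lemma fix_from (w : X) (b : 'I_n.-1 -> X) : (forall i, (1 <= i <= n)%N -> U i w) ->
  (forall i : 'I_n.-1, hperp ip (U i.+1) (dif b i)) ->
  (forall i : 'I_n.-1, i.+1 = n.-1 -> hperp ip (U n) (b i)) ->
  Tmap P ((fun _ => w) + b) = (fun _ => w) + b.
Proof.
move=> Zw hd hl; set z := (fun _ => w) + b; set zz := hcoord z.
have zzE : forall j, (j.-1 < n.-1)%N -> zz j = w + hcoord b j.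
  by move=> j hj; rewrite /zz /z hcD hc_const.
have k0 : (0 < n.-1)%N by lia.
have Mw : forall j, (1 <= j <= n.-1)%N -> Mseq P zz j = w.
  elim=> [//|j IH] /andP[_ hj]; case: j IH hj => [|j] IH hj.
    rewrite /= zzE //; apply: Pchar; [lia | apply: Zw; lia |].
    rewrite addrC addKr (@hcE' _ _ b 1%N k0).
    by have := hd (Ordinal k0); rewrite /dif /= subr0.
  have hj' : (j.+1 < n.-1)%N by lia.
  rewrite -[Mseq P zz j.+2]/(P j.+2 (Mseq P zz j.+1 + zz j.+2 - zz j.+1)) IH; last by lia.
  apply: Pchar; [lia | apply: Zw; lia |].
  rewrite !zzE //=; try lia.
  have := hd (Ordinal hj'); rewrite /dif /= -(hcE b (Ordinal hj')) /=.
  by rewrite addrAC [w + (w + _)]addrC addrK opprD addrA [w + _]addrC addrK.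
apply/Tfix_iff => j /andP[j1 jn].
have x1 : hcoord (Mmap P z) 1 = w by rewrite xE ?Mw //; lia.
rewrite x1; case: (ltngtP j n) => hjn; [| lia |].
  by rewrite xE ?Mw //; lia.
rewrite hjn xnE -/zz !Mw; try lia.
have kk : (n.-1.-1 < n.-1)%N by lia.
apply: Pchar; [lia | apply: Zw; lia |].
rewrite zzE; last by lia.
rewrite addrAC addrK opprD addrA subrr add0r (hcE' _ kk).
apply: subspN (hperp_subsp H _) _; apply: hl => /=; lia.
Qed.

End Fix.

Section PsiS.
Variables (Y : zmodType) (m : nat).

Lemma sumle0 (F : 'I_m -> Y) (i : 'I_m) : val i = 0%N ->
  \sum_(l < m | (l <= i)%N) F l = F i.
Proof.
move=> hv; have hv' : nat_of_ord i = 0%N := hv.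
rewrite (big_pred1 i) // => l /=; rewrite -val_eqE /= hv'; lia.
Qed.

Lemma sumleS (F : 'I_m -> Y) (i : 'I_m) j : val i = j.+1 ->
  \sum_(l < m | (l <= i)%N) F l = \sum_(l < m | (l <= j)%N) F l + F i.
Proof.
move=> hv; have hv' : nat_of_ord i = j.+1 := hv.
rewrite (bigD1 i) //= addrC; congr (_ + _); apply: eq_bigl => l.
rewrite -val_eqE /= hv'; lia.
Qed.

Lemma Psi_dif (y : 'I_m -> Y) : dif (Psi y) = y.
Proof.
apply: funext => i; rewrite /dif /Psi.
case hv : (val i) => [|j]; first by rewrite subr0 sumle0.
have hv2 : nat_of_ord i = j.+1 := hv.
have hj : (j < m)%N by have := ltn_ord i; lia.
rewrite (sumleS _ hv) hv2 (@hcE' _ _ _ j.+1 hj) /=.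
by rewrite [_ + y i]addrC addrK.
Qed.

Lemma dif_Psi (b : 'I_m -> Y) : Psi (dif b) = b.
Proof.
have key : forall j (h : (j < m)%N), Psi (dif b) (Ordinal h) = b (Ordinal h).
  elim=> [|j IH] h.
    by rewrite /Psi sumle0 // /dif /= subr0.
  have hj : (j < m)%N by lia.
  rewrite /Psi (sumleS _ (i := Ordinal h) (j := j)) //.
  have := IH hj; rewrite /Psi /= => ->.
  by rewrite /dif /= (@hcE' _ _ _ j.+1 hj) addrC subrK.
by apply: funext => -[i hi]; apply: key.
Qed.

End PsiS.

Section More.
Variables (R : realType) (X : lmodType R) (ip : X -> X -> R).
Hypothesis H : ipax ip.

Lemma hcZ m (a : R) (f : 'I_m -> X) j : hcoord (a *: f) j = a *: hcoord f j.
Proof. by rewrite /hcoord; case: insubP => [i' _ _|_] //; rewrite scaler0. Qed.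

Lemma difE m (b : 'I_m -> X) (i : 'I_m) :
  dif b i = b i - (if nat_of_ord i is 0 then 0 else hcoord b (nat_of_ord i)).
Proof. by []. Qed.

Lemma difL m (a : R) (x y : 'I_m -> X) i : dif (a *: x + y) i = a *: dif x i + dif y i.
Proof.
rewrite !difE; case: (nat_of_ord i) => [|j].
  by rewrite !subr0.
rewrite hcD hcZ /= scalerBr opprD !addrA; congr (_ - _).
by rewrite addrAC.
Qed.

Lemma difB m (x y : 'I_m -> X) i : dif (x - y) i = dif x i - dif y i.
Proof.
have := difL (-1) y x i; rewrite !scaleN1r => h.
by rewrite addrC h addrC.
Qed.

Lemma PsiL m (a : R) (x y : 'I_m -> X) : Psi (a *: x + y) = a *: Psi x + Psi y.
Proof.
apply: funext => i; rewrite /Psi /= big_split /= -scaler_sumr.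
by [].
Qed.

Lemma PsiB m (x y : 'I_m -> X) : Psi (x - y) = Psi x - Psi y.
Proof.
have := PsiL (-1) y x; rewrite !scaleN1r => h.
by rewrite addrC h addrC.
Qed.

Lemma nsq_sum_le I (r : seq I) (P : pred I) (F : I -> X) :
  nsq ip (\sum_(j <- r | P j) F j) <= 2 ^+ size r * \sum_(j <- r | P j) nsq ip (F j).
Proof.
elim: r => [|a r IH]; first by rewrite !big_nil /nsq ip0l // mulr0.
rewrite !big_cons /=; case: (P a).
  have h := nsqB_le H (F a) (- \sum_(j <- r | P j) F j).
  rewrite opprK (nsqN H) in h; apply: (le_trans h).
  have s0 : 0 <= \sum_(j <- r | P j) nsq ip (F j) by apply: sumr_ge0 => j _; exact: nsq_ge0.
  have p1 : 1 <= 2 ^+ size r :> R by rewrite exprn_ege1 // ler1n.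
  have fa := nsq_ge0 H (F a).
  rewrite exprS; nra.
have s0 : 0 <= \sum_(j <- r | P j) nsq ip (F j) by apply: sumr_ge0 => j _; exact: nsq_ge0.
apply: (le_trans IH); rewrite exprS ler_wpM2r //; last first.
  by rewrite ler_peMl ?exprn_ge0 // ler1n.
Qed.

Lemma nsq_hc_le m (d : 'I_m -> X) j : nsq ip (hcoord d j) <= nsq (@ipn R X ip m) d.
Proof.
rewrite /hcoord; case: insubP => [i' _ _|_]; first exact: nsq_coord.
by rewrite /nsq ip0l //; exact: (nsq_ge0 (ipax_n m H) d).
Qed.

Lemma nsq_dif_le m (d : 'I_m -> X) i : nsq ip (dif d i) <= 4 * nsq (@ipn R X ip m) d.
Proof.
rewrite difE; have h1 := nsq_coord H d i.
have h0 : forall t, nsq ip (d i - t) <= 2 * nsq ip (d i) + 2 * nsq ip t by exact: nsqB_le.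
case: (nat_of_ord i) => [|j].
  rewrite subr0; have := nsq_ge0 (ipax_n m H) d; lra.
have := h0 (hcoord d j.+1); have := nsq_hc_le d j.+1; lra.
Qed.

Lemma ip_closed_ext (V : lmodType R) (ipV : V -> V -> R) (A B : set V) :
  (forall v, A v <-> B v) -> ip_closed ipV A -> ip_closed ipV B.
Proof.
move=> hAB hA v hv; apply/hAB; apply: hA => e e0.
by have [s [Bs hs]] := hv e e0; exists s; split => //; apply/hAB.
Qed.

Lemma ip_closedA (V : lmodType R) (ipV : V -> V -> R) (A B : set V) :
  ip_closed ipV A -> ip_closed ipV B -> ip_closed ipV [set v | A v /\ B v].
Proof.
move=> hA hB v hv; split; [apply: hA|apply: hB] => e e0;
  by have [s [[As Bs] hs]] := hv e e0; exists s.
Qed.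

End More.

Theorem mainTheorem3 (R : realType) (X : completeNormedModType R)
  (ip : X -> X -> R) (n : nat) (U : nat -> set X) :
  inner_product ip ->
  (3 <= n)%N ->
  (forall i, (1 <= i <= n)%N -> hclosed_subspace (U i)) ->
  let P := fun i => hproj ip (U i) in
  let Z := [set x | forall i, (1 <= i <= n)%N -> U i x] in
  let ipX := @ipn R X ip n.-1 in
  let domPsi := [set y : 'I_n.-1 -> X | forall i : 'I_n.-1, hperp ip (U i.+1) (y i)] in
  let ranPsi := (@Psi X n.-1) @` domPsi in
  let E := [set z : 'I_n.-1 -> X | ranPsi z /\
              forall i : 'I_n.-1, i.+1 = n.-1 -> hperp ip (U n) (z i)] in
  let Delta := [set z : 'I_n.-1 -> X | exists w, Z w /\ forall i, z i = w] in
  let FixT := [set z : 'I_n.-1 -> X | Tmap P z = z] in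
  (linear_on domPsi (@Psi X n.-1) /\
   ip_continuous_on ipX ipX domPsi (@Psi X n.-1) /\
   ip_closed ipX ranPsi) /\
  (FixT = [set a + b | a in Delta & b in E] /\
   (forall a b, Delta a -> E b -> ipX a b = 0) /\
   E `<=` [set z : 'I_n.-1 -> X | forall i : 'I_n.-1,
             sum_perps ip U i.+1 (z i) /\
             (i.+1 = n.-1 -> hperp ip (U n) (z i))] /\
   (forall z : 'I_n.-1 -> X,
      let zbar := ((n.-1)%:R)^-1 *: \sum_(i < n.-1) z i in
      hproj ipX FixT z = (fun _ => hproj ip Z zbar) + hproj ipX E z /\
      P 1%N (hcoord (hproj ipX FixT z) 1%N) = hproj ip Z zbar)).
Proof.
move=> Hip hn hU P Z ipX domPsi ranPsi E Delta FixT.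
have HX := ipax_X Hip.
have HXc := ipcomplete_X Hip.
have Hk : ipax ipX := ipax_n n.-1 HX.
have Hkc : ipcomplete ipX := ipcomplete_n HX HXc.
have projX : forall S, subsp S -> ip_closed ip S -> forall v,
    S (hproj ip S v) /\ forall s, S s -> ip (v - hproj ip S v) s = 0.
  by move=> S SS cS v; apply: hproj_orth => //; apply: proj_exists.
have projK : forall S, subsp S -> ip_closed ipX S -> forall v,
    S (hproj ipX S v) /\ forall s, S s -> ipX (v - hproj ipX S v) s = 0.
  by move=> S SS cS v; apply: hproj_orth => //; apply: proj_exists.
have hUs : forall i, (1 <= i <= n)%N -> subsp (U i).
  by move=> i hi; have [h0 h1 _] := hU i hi; split.
have hUc : forall i, (1 <= i <= n)%N -> ip_closed ip (U i).
  by move=> i hi; have [_ _ h2] := hU i hi; apply: ip_closed_X.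
have PU : forall i v, (1 <= i <= n)%N -> U i (P i v).
  by move=> i v hi; have [] := projX _ (hUs i hi) (hUc i hi) v.
have Porth : forall i v, (1 <= i <= n)%N -> hperp ip (U i) (v - P i v).
  by move=> i v hi; have [] := projX _ (hUs i hi) (hUc i hi) v.
have Pchar : forall i v p, (1 <= i <= n)%N -> U i p -> hperp ip (U i) (v - p) -> P i v = p.
  move=> i v p hi Up hp; apply: hproj_char => // s Us; apply: hp.
  by apply: subspB => //; apply: hUs.
have Zs : subsp Z.
  split; first by move=> i hi; case: (hUs i hi).
  by move=> a x y hx hy i hi; case: (hUs i hi) => _; apply; [apply: hx | apply: hy].
have Zc : ip_closed ip Z.
  by apply: ip_closedI => i; apply: ip_closed_imp; apply: hUc.
have k0 : (0 < n.-1)%N by lia.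
have ranE : forall b, ranPsi b <-> forall i : 'I_n.-1, hperp ip (U i.+1) (dif b i).
  move=> b; split.
    by case=> y hy <- i; rewrite Psi_dif; apply: hy.
  by move=> hb; exists (dif b); [exact: hb | exact: dif_Psi].
have hpS : forall i, subsp (hperp ip (U i)) by move=> i; exact: hperp_subsp.
have Es : subsp E.
  split.
    split.
      apply/ranE => i; have := difB (0 : 'I_n.-1 -> X) 0 i; rewrite subrr => ->.
      by rewrite subrr; case: (hpS i.+1).
    by move=> i _; case: (hpS n).
  move=> a x y [/ranE hx hlx] [/ranE hy hly]; split.
    by apply/ranE => i; rewrite difL; apply: (proj2 (hpS _)); [apply: hx | apply: hy].
  by move=> i hi; apply: (proj2 (hpS _)); [apply: hlx | apply: hly].
have RDc : ip_closed ipX [set b | forall i : 'I_n.-1, hperp ip (U i.+1) (dif b i)].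
  apply: ip_closedI => i.
  apply: (ip_closed_pre Hk HX (f := fun b => dif b i) (c := 4)) => //.
    by move=> v w; rewrite -difB; apply: nsq_dif_le.
  exact: hperp_closed.
have Ec : ip_closed ipX E.
  refine (@ip_closed_ext _ _ ipX [set v | [set b | forall i : 'I_n.-1, hperp ip (U i.+1) (dif b i)] v /\
     [set b | forall i : 'I_n.-1, i.+1 = n.-1 -> hperp ip (U n) (b i)] v] E _ _).
    by move=> v; split => -[h1 h2]; split => //; apply/ranE.
  apply: ip_closedA => //.
  apply: ip_closedI => i; apply: ip_closed_imp => _.
  apply: (ip_closed_pre Hk HX (f := fun b => b i) (c := 1)) => //.
    by move=> v w; rewrite mul1r; apply: (nsq_coord HX (v - w) i).
  exact: hperp_closed.
have orth : forall a b, Delta a -> E b -> ipX a b = 0.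
  move=> a b [w [Zw ha]] [[y hy hb] _].
  rewrite /ipX /ipn big1 // => i _; rewrite ha -hb /Psi ip_sumr // big1 // => j _.
  rewrite ipC //; apply: hy; apply: Zw; have := ltn_ord j; lia.
have hFix : FixT = [set a + b | a in Delta & b in E].
  apply/seteqP; split => z.
    move=> hz; have [w [Zw [hd hl]]] := fix_to HX hn PU Porth hz.
    exists (fun _ => w); first by exists w.
    exists (z - fun _ => w); first by split => //; apply/ranE.
    by rewrite addrC subrK.
  case=> a [w [Zw ha]] [b [hb hl]] <-.
  have -> : a = fun _ => w by apply: funext.
  by apply: (fix_from HX hn Pchar Zw _ hl); apply/ranE.
have lipPsi : exists c : R, 0 <= c /\ forall v w,
    nsq ipX (Psi v - Psi w) <= c * nsq ipX (v - w).
  exists ((n.-1)%:R * 2 ^+ size (index_enum 'I_n.-1)); split.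
    by apply: mulr_ge0; [apply: ler0n | apply: exprn_ge0].
  move=> v w; rewrite -PsiB; set d := v - w.
  have hd : forall i : 'I_n.-1, nsq ip (Psi d i) <= 2 ^+ size (index_enum 'I_n.-1) * nsq ipX d.
    move=> i; rewrite /Psi; apply: (le_trans (nsq_sum_le HX _ _ _)).
    apply: ler_wpM2l; first exact: exprn_ge0.
    rewrite /nsq /ipX /ipn big_mkcond /=; apply: ler_sum => j _.
    by case: (_ <= _)%N => //; apply: ipge0.
  rewrite {1}/nsq /ipX /ipn.
  apply: (le_trans (ler_sum _ (fun i _ => hd i))).
  have -> : nsq (fun z w0 : 'I_n.-1 -> X => \sum_(i < n.-1) ip (z i) (w0 i)) d = nsq ipX d by [].
  by rewrite sumr_const card_ord -mulrA mulr_natl.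
have [cP [cP0 hcP]] := lipPsi.
split; first split.
- by move=> a v w _ _; apply: PsiL.
- split.
    by move=> v _ e e0; have [d [d0 hd]] := lip_pre Hk Hk cP0 hcP v e0; exists d; split => // w _; apply: hd.
  refine (@ip_closed_ext _ _ ipX _ ranPsi _ RDc).
  by move=> v; split => /ranE.
split => //.
split => //.
split.
  move=> z [[y hy hz] hl] i; split; last exact: hl i.
  exists (hcoord y); split.
    move=> j /andP[j1 ji]; have hj : (j.-1 < n.-1)%N by have := ltn_ord i; lia.
    rewrite (hcE' _ hj); have := hy (Ordinal hj); rewrite /= prednK //.
  rewrite -hz /Psi big_add1 /=.
  rewrite (big_nat_widen 0 i.+1 n.-1 xpredT); last by have := ltn_ord i; lia.
  rewrite big_mkord; apply: eq_big => [l|l _]; first by rewrite ltnS.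
  by rewrite hcE.
move=> z zbar.
set c := hproj ip Z zbar; set pe := hproj ipX E z.
have [Zc' orthZ] := projX Z Zs Zc zbar.
have [Epe orthE] := projK E Es Ec z.
have key : hproj ipX FixT z = (fun _ => c) + pe.
  apply: hproj_char.
  - exact: Hk.
  - by rewrite hFix; exists (fun _ => c); [exists c | exists pe].
  rewrite hFix => s [a [w [Zw ha]] [b Eb <-]].
  have -> : a = fun _ => w by apply: funext.
  have -> : (fun _ => c) + pe - ((fun _ => w) + b) = (fun _ => c - w) + (pe - b).
    by apply: funext => i /=; rewrite opprD addrACA.
  have Zu : Z (c - w) by apply: (subspB Zs Zc' Zw).
  have Eb' : E (pe - b) by apply: (subspB Es Epe Eb).
  rewrite ipDr //.
  have -> : z - ((fun _ => c) + pe) = (z - pe) - (fun _ => c).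
    apply: funext => i; change (z i - (c + pe i) = z i - pe i - c).
    by rewrite opprD addrA addrAC.
  have Dc : Delta (fun _ => c) by exists c.
  have Du : Delta (fun _ => c - w) by exists (c - w).
  rewrite (ipBl Hk) (ipBl Hk) (ipBl Hk (z - pe)) (orthE _ Eb') (orth _ _ Dc Eb').
  rewrite (ipC Hk pe) (orth _ _ Du Epe).
  have e1 : ipX z (fun _ => c - w) = ip (\sum_(i < n.-1) z i) (c - w).
    by rewrite /ipX /ipn ip_suml.
  have e2 : ipX (fun _ => c) (fun _ => c - w) = (n.-1)%:R * ip c (c - w).
    by rewrite /ipX /ipn sumr_const card_ord mulr_natl.
  have e3 : \sum_(i < n.-1) z i = (n.-1)%:R *: zbar.
    by rewrite /zbar scalerA mulfV ?scale1r // pnatr_eq0 -lt0n.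
  rewrite e1 e2 e3 (ipZl HX) subr0 subrr addr0 -mulrBr -(ipBl HX) (orthZ _ Zu) mulr0.
  by [].
split => //.
rewrite key (@hcE' _ _ _ 1%N k0) /=; apply: Pchar; [lia | apply: Zc'; lia |].
rewrite addrC addKr.
have := (proj1 (ranE pe) (proj1 Epe)) (Ordinal k0).
by rewrite difE /= subr0.
Qed.
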